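(* Let $\mathbb{H}$ be a Hilbert space with norm $\|\cdot\|$, $f\in\mathbb{H}$, and let $D$ be a finite or infinite dictionary of elements of $\mathbb{H}$. For $\lambda\ge0$ and $\delta>0$ define $$L_D(f,\lambda)=\inf_{h\in\mathcal{L}_1(D)}\big(\|f-h\|^2+\lambda\|h\|_{\mathcal{L}_1(D)}\big),\qquad K_D(f,\delta)=\inf_{h\in\mathcal{L}_1(D)}\big(\|f-h\|+\delta\|h\|_{\mathcal{L}_1(D)}\big).$$ Then for every $\lambda\ge0$, $$\frac12\inf_{\delta>0}\Big(K_D^2(f,\delta)+\frac{\lambda^2}{2\delta^2}\Big)\le L_D(f,\lambda)\le\inf_{\delta>0}\Big(K_D^2(f,\delta)+\frac{\lambda^2}{4\delta^2}\Big).$$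
   Context: $\mathcal{L}_1(D)$ denotes the set of $h\in\mathbb{H}$ which can be written $h=\sum_{\phi\in D}\theta_\phi\phi$ with $\sum_{\phi\in D}|\theta_\phi|<\infty$, equipped with $\|h\|_{\mathcal{L}_1(D)}=\inf\{\sum_{\phi\in D}|\theta_\phi|:h=\sum_{\phi\in D}\theta_\phi\phi\}$. *)

(* Defs.v *)
From HB Require Import structures.
From mathcomp Require Import all_boot all_order all_algebra.
From mathcomp Require Import all_classical all_reals all_analysis.
Set Implicit Arguments. Unset Strict Implicit. Unset Printing Implicit Defensive.
Import Order.TTheory GRing.Theory Num.Theory.
Import numFieldNormedType.Exports.
Local Open Scope classical_set_scope.
Local Open Scope ring_scope.

Definition hilbert_inner (R : realType) (V : completeNormedModType R)
  (ip : V -> V -> R) : Prop :=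
  (forall x y, ip x y = ip y x) /\
  (forall (a : R) (x y z : V), ip (a *: x + y) z = a * ip x z + ip y z) /\
  (forall x, `|x| ^+ 2 = ip x x).

Definition l1rep (R : realType) (V : completeNormedModType R)
  (D : set V) (h : V) (c : R) : Prop :=
  exists (phi : nat -> V) (theta : nat -> R),
    (forall n, theta n != 0 -> D (phi n)) /\
    series (fun n => theta n *: phi n) @ \oo --> h /\
    series (fun n => `|theta n|) @ \oo --> c.

Definition L1 (R : realType) (V : completeNormedModType R) (D : set V)
  : set V := [set h | exists c, l1rep D h c].

Definition l1norm (R : realType) (V : completeNormedModType R)
  (D : set V) (h : V) : R := inf [set c | l1rep D h c].

Definition LD (R : realType) (V : completeNormedModType R)
  (D : set V) (f : V) (lambda : R) : R :=
  inf [set `|f - h| ^+ 2 + lambda * l1norm D h | h in L1 D].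

Definition KD (R : realType) (V : completeNormedModType R)
  (D : set V) (f : V) (delta : R) : R :=
  inf [set `|f - h| + delta * l1norm D h | h in L1 D].

(* Main.v *)
Require Import Defs.
From HB Require Import structures.
From mathcomp Require Import all_boot all_order all_algebra.
From mathcomp Require Import all_classical all_reals all_analysis.
From mathcomp Require Import ring lra.
Import Order.TTheory GRing.Theory Num.Theory.
Import numFieldNormedType.Exports.
Local Open Scope classical_set_scope.
Local Open Scope ring_scope.

Section S.
Variables (R : realType) (V : completeNormedModType R) (D : set V).

Lemma l1rep_ge0 h c : l1rep D h c -> 0 <= c.
Proof.
move=> [phi [theta [_ [_ Hc]]]].
have -> : c = lim (series (fun n => `|theta n|) @ \oo) by rewrite (cvg_lim _ Hc).
apply: limr_ge; first by apply/cvg_ex; exists c.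
near=> n; rewrite /series /=; apply: sumr_ge0 => i _; exact: normr_ge0.
Unshelve. all: by end_near.
Qed.

Lemma L1_0 : L1 D 0.
Proof.
rewrite /L1 /l1rep /=; exists 0, (fun _ => 0), (fun _ => 0); split; first by move=> n; rewrite eqxx. split.
- rewrite /series /=.
  under eq_fun do rewrite big1 ?scale0r //. exact: cvg_cst.
- rewrite /series /=.
  under eq_fun do rewrite big1 ?normr0 //. exact: cvg_cst.
Qed.

Lemma l1norm_ge0 h : L1 D h -> 0 <= l1norm D h.
Proof.
move=> [c Hc]; apply: lb_le_inf; first by exists c.
by move=> x /l1rep_ge0.
Qed.

Lemma l1norm_ge0' h : 0 <= l1norm D h.
Proof.
Abort.

Lemma KD_le f d h : 0 <= d -> L1 D h -> KD D f d <= `|f - h| + d * l1norm D h.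
Proof.
move=> d0 Lh; apply: (ge_inf); last by exists h.
exists 0 => _ [g Lg <-]; apply: addr_ge0 => //; apply: mulr_ge0 => //; exact: l1norm_ge0.
Qed.

Lemma KD_ge0 f d : 0 <= d -> 0 <= KD D f d.
Proof.
move=> d0; apply: lb_le_inf; first by exists (`|f - 0| + d * l1norm D 0), 0; [exact: L1_0|].
move=> _ [g Lg <-]; apply: addr_ge0 => //; apply: mulr_ge0 => //; exact: l1norm_ge0.
Qed.
End S.

Lemma choose_t (R : realType) (b l e : R) : 0 <= b -> 0 <= l -> 0 < e ->
  exists t : R, 0 < t /\ 2 * t * b ^+ 2 + l ^+ 2 / (2 * t) <= 2 * l * b + e.
Proof.
move=> b0 l0 e0.
have [lp|] := ltP 0 l; last first.
  move=> lle; have -> : l = 0 by apply/eqP; rewrite eq_le lle l0.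
  exists (e / (2 * (b ^+ 2 + 1))); split.
    by apply: divr_gt0 => //; apply: mulr_gt0 => //; apply: ltr_wpDl => //; exact: sqr_ge0.
  have hp : 0 < b ^+ 2 + 1 by apply: ltr_wpDl => //; exact: sqr_ge0.
  rewrite expr0n /= !mul0r ?mulr0 ?add0r ?addr0.
  have -> : 2 * (e / (2 * (b ^+ 2 + 1))) * b ^+ 2 = e * (b ^+ 2 / (b ^+ 2 + 1)).
    by field; rewrite gt_eqF.
  rewrite mul0r add0r ler_piMr ?ltW // ltr_pdivrMr // mul1r; lra.
have [bp|] := ltP 0 b; last first.
  move=> ble; have -> : b = 0 by apply/eqP; rewrite eq_le ble b0.
  exists (l ^+ 2 / e); split; first by apply: divr_gt0 => //; exact: exprn_gt0.
  rewrite expr0n /= !mulr0 ?add0r ?addr0.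
  have -> : l ^+ 2 / (2 * (l ^+ 2 / e)) = e / 2.
    by field; rewrite ?gt_eqF ?exprn_gt0.
  lra.
exists (l / (2 * b)); split; first by apply: divr_gt0 => //; exact: mulr_gt0.
have -> : 2 * (l / (2 * b)) * b ^+ 2 + l ^+ 2 / (2 * (l / (2 * b))) = 2 * l * b.
  by field; rewrite ?gt_eqF.
lra.
Qed.

Theorem lemma5p1 (R : realType) (V : completeNormedModType R)
  (ip : V -> V -> R) (Hip : hilbert_inner ip)
  (f : V) (D : set V) (lambda : R) (hlambda : 0 <= lambda) :
  2^-1 * inf [set KD D f delta ^+ 2 + lambda ^+ 2 / (2 * delta ^+ 2)
              | delta in [set d : R | 0 < d]]
    <= LD D f lambda /\
  LD D f lambda <=
    inf [set KD D f delta ^+ 2 + lambda ^+ 2 / (4 * delta ^+ 2)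
         | delta in [set d : R | 0 < d]].
Proof.
have LDne : [set `|f - h| ^+ 2 + lambda * l1norm D h | h in L1 D] !=set0.
  by exists (`|f - 0| ^+ 2 + lambda * l1norm D 0), 0; [exact: L1_0|].
have LDle h : L1 D h -> LD D f lambda <= `|f - h| ^+ 2 + lambda * l1norm D h.
  move=> Lh; apply: ge_inf; last by exists h.
  exists 0 => _ [g Lg <-]; apply: addr_ge0; first exact: sqr_ge0.
  by apply: mulr_ge0 => //; exact: l1norm_ge0.
split.
- apply: lb_le_inf => // _ [h Lh <-].
  set a := `|f - h|; set b := l1norm D h.
  have a0 : 0 <= a by exact: normr_ge0.
  have b0 : 0 <= b by exact: l1norm_ge0.
  rewrite -ler_pdivlMl ?invr_gt0 // invrK.
  apply/ler_addgt0Pr => e e0.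
  have [t [t0 Ht]] := @choose_t R _ _ _ b0 hlambda e0.
  set d := Num.sqrt t.
  have d0 : 0 < d by rewrite sqrtr_gt0.
  have dt : d ^+ 2 = t by rewrite sqr_sqrtr // ltW.
  apply: (@le_trans _ _ (KD D f d ^+ 2 + lambda ^+ 2 / (2 * d ^+ 2))).
    apply: ge_inf; last by exists d.
    exists 0 => _ [d' _ <-]; apply: addr_ge0; first exact: sqr_ge0.
    apply: divr_ge0; first exact: sqr_ge0.
    by apply: mulr_ge0 => //; exact: sqr_ge0.
  have K0 := @KD_ge0 R V D f d (ltW d0).
  have Kle := @KD_le R V D f d h (ltW d0) Lh.
  have : KD D f d ^+ 2 <= (a + d * b) ^+ 2.
    by rewrite ler_sqr // nnegrE // addr_ge0 // mulr_ge0 // ltW.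
  rewrite dt in Ht *.
  have : (a + d * b) ^+ 2 <= 2 * a ^+ 2 + 2 * t * b ^+ 2.
    rewrite -dt; have := sqr_ge0 (a - d * b); nra.
  lra.
- apply: lb_le_inf.
    by exists (KD D f 1 ^+ 2 + lambda ^+ 2 / (4 * 1 ^+ 2)), 1 => //=; exact: ltr01.
  move=> _ [d /= d0 <-].
  set c := lambda ^+ 2 / (4 * d ^+ 2).
  have c0 : 0 <= c.
    by apply: divr_ge0; [exact: sqr_ge0|apply: mulr_ge0 => //; exact: sqr_ge0].
  have [|lt] := leP (LD D f lambda) c.
    move=> le; apply: (le_trans le); rewrite lerDr; exact: sqr_ge0.
  set s := Num.sqrt (LD D f lambda - c).
  have s0 : 0 <= s by exact: sqrtr_ge0.
  have ss : s ^+ 2 = LD D f lambda - c by rewrite sqr_sqrtr // subr_ge0 ltW.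
  have sK : s <= KD D f d.
    apply: lb_le_inf.
      by exists (`|f - 0| + d * l1norm D 0), 0; [exact: L1_0|].
    move=> _ [h Lh <-].
    set a := `|f - h|; set b := l1norm D h.
    have a0 : 0 <= a by exact: normr_ge0.
    have b0 : 0 <= b by exact: l1norm_ge0.
    rewrite -ler_sqr ?nnegrE; last by rewrite addr_ge0 // mulr_ge0 // ltW.
    2: done.
    rewrite ss.
    have := LDle h Lh; rewrite -/a -/b => HL.
    have key : a ^+ 2 + lambda * b <= (a + d * b) ^+ 2 + c.
      set u := d * b; set v := lambda / (2 * d).
      have e1 : lambda * b = 2 * u * v by rewrite /u /v; field; rewrite gt_eqF.
      have e2 : c = v ^+ 2 by rewrite /c /v; field; rewrite gt_eqF.
      have u0 : 0 <= u by rewrite mulr_ge0 // ltW.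
      rewrite e1 e2; have := sqr_ge0 (u - v); have := mulr_ge0 a0 u0; nra.
    lra.
  have : s ^+ 2 <= KD D f d ^+ 2 by rewrite ler_sqr ?nnegrE // (le_trans s0 sK).
  rewrite ss; lra.
Qed.
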